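(* Let $(g,f)$ be a Riordan matrix with $f(t)=\sum_{j\ge1}f_jt^j$, let $Z(t)=\sum_{j\ge0}z_jt^j$ be the generating function of its $Z$-sequence, and let $\bar f(t)=\sum_{j\ge1}\bar f_jt^j$ be the compositional inverse of $f$ (with $\bar f_0=0$). Then a sequence $(\hat b_j)_{j\ge0}$ is a type-II $B$-sequence of $(g,f)$ if and only if $\hat b_0=z_0$, $z_1=0$, for every $\ell\ge1$ $$\hat b_\ell=f_1^{\ell}\Big(z_{2\ell}-\sum_{\mathbf i=(i_1,\dots,i_k)\in\mathcal D_{2\ell,\ell-1}}\hat b_k\,\bar f_{i_1-1}\bar f_{i_2-1}\cdots\bar f_{i_k-1}\Big),$$ and for every $\ell\ge1$ $$z_{2\ell+1}=\sum_{\mathbf i=(i_1,\dots,i_k)\in\mathcal D_{2\ell+1,\ell}}\hat b_k\,\bar f_{i_1-1}\bar f_{i_2-1}\cdots\bar f_{i_k-1}.$$ (Thus $\hat b_1=f_1z_2$, $z_3=\hat b_1\bar f_2$, $\hat b_2=f_1^2(z_4-\hat b_1\bar f_3)$, $z_5=\hat b_1\bar f_4+2\hat b_2\bar f_1\bar f_2$, etc., with $z_{2\ell}$ arbitrary.)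
   Context: Let $K$ be $\mathbb{R}$ or $\mathbb{C}$. A (proper) Riordan matrix is a pair $(g,f)$ of formal power series in $K[[t]]$ with $g(0)=1$, $f(0)=0$, $f'(0)\neq 0$, identified with the infinite lower triangular matrix $(d_{n,k})_{n,k\ge0}$, $d_{n,k}=[t^n]g(t)f(t)^k$; we set $d_{n,k}=0$ if $n<0$, $k<0$ or $k>n$. The $Z$-sequence of $(g,f)$ is the unique sequence whose generating function $Z(t)$ satisfies $g(t)=1/(1-tZ(f(t)))$. A type-II $B$-sequence is a sequence $(\hat b_j)_{j\ge0}$ such that $d_{n+1,0}=\sum_{j\ge0}\hat b_j d_{n-j,j}$ for all $n\ge0$. For positive integers $n,m$, $\mathcal D_{n,m}$ is the set of compositions of $n$ into at most $m$ parts, i.e. tuples $(i_1,\dots,i_k)$ of positive integers with $1\le k\le m$ and $i_1+\cdots+i_k=n$; $k$ is the length. By convention $\mathcal D_{2,0}=\emptyset$ (empty sums are $0$). *)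

(* Defs.v *)
From HB Require Import structures.
From mathcomp Require Import all_boot all_order all_algebra.
Set Implicit Arguments. Unset Strict Implicit. Unset Printing Implicit Defensive.
Import Order.TTheory GRing.Theory Num.Theory.
Local Open Scope ring_scope.

Definition fps (K : Type) := nat -> K.

Section FPS.
Variable K : numFieldType.

Definition fps1 : fps K := fun n => (n == 0)%:R.
Definition fpsX : fps K := fun n => (n == 1)%:R.

Definition fps_mul (a b : fps K) : fps K :=
  fun n => \sum_(i < n.+1) a i * b (n - i)%N.

Definition fps_sub (a b : fps K) : fps K := fun n => a n - b n.

Definition fps_pow (a : fps K) (k : nat) : fps K := iter k (fps_mul a) fps1.

(* composition a(b(t)), meaningful when b(0) = 0 *)
Definition fps_comp (a b : fps K) : fps K :=
  fun n => \sum_(k < n.+1) a k * fps_pow b k n.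

Definition proper_riordan (g f : fps K) : Prop :=
  g 0%N = 1 /\ f 0%N = 0 /\ f 1%N != 0.

Definition riordan_entry (g f : fps K) (n k : nat) : K :=
  fps_mul g (fps_pow f k) n.

(* z is the Z-sequence: g = 1/(1 - t Z(f(t))), i.e. g * (1 - t Z(f)) = 1 *)
Definition is_Zsequence (g f z : fps K) : Prop :=
  forall n, fps_mul g (fps_sub fps1 (fps_mul fpsX (fps_comp z f))) n = fps1 n.

Definition is_comp_inverse (f fbar : fps K) : Prop :=
  fbar 0%N = 0 /\ (forall n, fps_comp f fbar n = fpsX n)
               /\ (forall n, fps_comp fbar f n = fpsX n).

(* type-II B-sequence: d_{n+1,0} = sum_{j>=0} bhat_j d_{n-j,j}
   (terms with j > n vanish by the convention d_{n,k} = 0 for n < 0) *)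
Definition is_typeII_Bseq (g f bhat : fps K) : Prop :=
  forall n : nat, riordan_entry g f n.+1 0 =
    \sum_(j < n.+1) bhat j * riordan_entry g f (n - j)%N j.

(* sum over compositions (i_1,..,i_k) of n into at most m parts of
   bhat_k * fbar_{i_1 - 1} ... fbar_{i_k - 1} *)
Definition comp_sum (bhat fbar : fps K) (n m : nat) : K :=
  \sum_(k < m.+1 | (0 < k)%N)
    \sum_(i : {ffun 'I_k -> 'I_n.+1}
            | [forall j, (0 < i j)%N] && ((\sum_(j < k) (i j : nat))%N == n))
      bhat k * \prod_(j < k) fbar (i j).-1.

End FPS.

(* Main.v *)
Require Import Defs.
From HB Require Import structures.
From mathcomp Require Import all_boot all_order all_algebra.
From mathcomp Require Import zify.
From Stdlib Require Import FunctionalExtensionality.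
Set Implicit Arguments. Unset Strict Implicit. Unset Printing Implicit Defensive.
Import Order.TTheory GRing.Theory Num.Theory.
Local Open Scope ring_scope.

Section Aux.
Variable K : numFieldType.

Lemma sum_ext_le (F : nat -> K) a b : (a <= b)%N ->
  (forall i, (a <= i)%N -> F i = 0) ->
  \sum_(i < a) F i = \sum_(i < b) F i.
Proof.
move=> ab Ha; rewrite (big_ord_widen _ _ ab) big_mkcond /=.
apply: eq_bigr => i _; case: ifP => // /negbT; rewrite -leqNgt => h.
by rewrite Ha.
Qed.

Lemma sum_ext (F : nat -> K) a b :
  (forall i, (a <= i)%N -> F i = 0) -> (forall i, (b <= i)%N -> F i = 0) ->
  \sum_(i < a) F i = \sum_(i < b) F i.
Proof.
move=> Ha Hb; case: (leqP a b) => ab; first exact: sum_ext_le.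
by symmetry; apply: sum_ext_le => //; apply: ltnW.
Qed.

Definition eqN (N : nat) (p q : {poly K}) := forall n, (n <= N)%N -> p`_n = q`_n.

Lemma eqN_refl N p : eqN N p p. Proof. by []. Qed.
Lemma eqN_sym N p q : eqN N p q -> eqN N q p.
Proof. by move=> h n hn; rewrite h. Qed.
Lemma eqN_trans N p q r : eqN N p q -> eqN N q r -> eqN N p r.
Proof. by move=> h1 h2 n hn; rewrite h1 ?h2. Qed.

Lemma eqN_mul N p p' q q' : eqN N p p' -> eqN N q q' -> eqN N (p * q) (p' * q').
Proof.
move=> h1 h2 n hn; rewrite !coefM; apply: eq_bigr => i _.
have hi := ltn_ord i.
by rewrite h1 ?h2 //; lia.
Qed.

Lemma eqN_exp N p p' k : eqN N p p' -> eqN N (p ^+ k) (p' ^+ k).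
Proof.
move=> h; elim: k => [|k IH]; first by rewrite !expr0.
by rewrite !exprS; apply: eqN_mul.
Qed.

Lemma coef_exp_small (q : {poly K}) k n : q`_0 = 0 -> (n < k)%N -> (q ^+ k)`_n = 0.
Proof.
move=> q0; elim: k n => [|k IH] n // hn.
rewrite exprS coefM big1 // => i _.
case: (posnP i) => [->|ip]; first by rewrite q0 mul0r.
by rewrite IH ?mulr0 //; have := ltn_ord i; lia.
Qed.

Lemma coef_mul_exp_small (p q : {poly K}) k n : q`_0 = 0 -> (n < k)%N -> (p * q ^+ k)`_n = 0.
Proof.
move=> q0 hn; rewrite coefM big1 // => i _.
by rewrite coef_exp_small ?mulr0 //; lia.
Qed.

Lemma coef_mul_comp (p r q : {poly K}) n N : q`_0 = 0 -> (n <= N)%N ->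
  (p * (r \Po q))`_n = \sum_(i < N.+1) r`_i * (p * q ^+ i)`_n.
Proof.
move=> q0 hn; rewrite comp_polyE mulr_sumr coef_sum.
rewrite (eq_bigr (fun i : 'I__ => r`_i * (p * q ^+ i)`_n)); last first.
  by move=> i _; rewrite -scalerAr coefZ.
apply: (@sum_ext (fun i => r`_i * (p * q ^+ i)`_n)) => i hi.
  by rewrite nth_default ?mul0r.
by rewrite coef_mul_exp_small ?mulr0 //; lia.
Qed.

Lemma coef_comp_trunc (r q : {poly K}) n N : q`_0 = 0 -> (n <= N)%N ->
  (r \Po q)`_n = \sum_(i < N.+1) r`_i * (q ^+ i)`_n.
Proof.
move=> q0 hn; rewrite -[r \Po q]mul1r (coef_mul_comp _ _ q0 hn).
by apply: eq_bigr => i _; rewrite mul1r.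
Qed.

Lemma eqN_comp N p p' q q' : eqN N p p' -> eqN N q q' -> q`_0 = 0 ->
  eqN N (p \Po q) (p' \Po q').
Proof.
move=> h1 h2 q0 n hn.
have q'0 : q'`_0 = 0 by rewrite -h2.
rewrite (coef_comp_trunc _ q0 hn) (coef_comp_trunc _ q'0 hn).
apply: eq_bigr => i _; rewrite h1; last by have := ltn_ord i.
by rewrite (eqN_exp i h2).
Qed.


Definition tr (N : nat) (a : fps K) : {poly K} := \poly_(i < N.+1) a i.

Lemma tr_coef N a n : (n <= N)%N -> (tr N a)`_n = a n.
Proof. by move=> hn; rewrite coef_poly ltnS hn. Qed.

Lemma eqN_tr_mul N a b : eqN N (tr N (fps_mul a b)) (tr N a * tr N b).
Proof.
move=> n hn; rewrite tr_coef // coefM /fps_mul; apply: eq_bigr => i _.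
by have := ltn_ord i; move=> hi; rewrite !tr_coef //; lia.
Qed.

Lemma eqN_tr_pow N a k : eqN N (tr N (fps_pow a k)) (tr N a ^+ k).
Proof.
elim: k => [|k IH] n hn.
  by rewrite tr_coef // expr0 coef1.
rewrite (@eqN_tr_mul N a (fps_pow a k) n hn) exprS.
apply: (@eqN_mul N (tr N a) (tr N a)) => //.
Qed.

Lemma tr_pow_coef N a k n : (n <= N)%N -> fps_pow a k n = ((tr N a) ^+ k)`_n.
Proof. by move=> hn; rewrite -eqN_tr_pow // tr_coef. Qed.

Lemma tr0 N a : (tr N a)`_0 = a 0%N.
Proof. exact: tr_coef. Qed.

Lemma eqN_tr_comp N a b : b 0%N = 0 -> eqN N (tr N (fps_comp a b)) (tr N a \Po tr N b).
Proof.
move=> b0 n hn; rewrite tr_coef // (@coef_comp_trunc _ _ n n) ?tr0 //.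
apply: eq_bigr => k _; have := ltn_ord k => hk.
by rewrite tr_coef ?(tr_pow_coef _ _ hn) //; lia.
Qed.

Lemma tr_sub N a b : tr N (fps_sub a b) = tr N a - tr N b.
Proof. by apply/polyP => i; rewrite coefB !coef_poly; case: ifP; rewrite ?subr0. Qed.

Lemma tr_1 N : tr N (fps1 K) = 1.
Proof. by apply/polyP => i; rewrite coef1 coef_poly; case: ifP => //; case: i. Qed.

Lemma eqN_tr_X N : eqN N (tr N (fpsX K)) 'X.
Proof. by move=> n hn; rewrite tr_coef // coefX. Qed.

Lemma tr_ext N a b : (forall n, (n <= N)%N -> a n = b n) -> tr N a = tr N b.
Proof. by move=> h; apply: eq_poly => i hi; apply: h. Qed.


Lemma mul_cancel (g a b : fps K) : g 0%N = 1 ->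
  (forall n, fps_mul g a n = fps_mul g b n) -> forall n, a n = b n.
Proof.
move=> g0 h; elim/ltn_ind => n IH.
have := h n; rewrite /fps_mul !big_ord_recl /= !subn0 g0 !mul1r.
rewrite (eq_bigr (fun i : 'I_n => g (bump 0 i) * b (n - bump 0 i)%N)).
  by move/addIr.
move=> i _; rewrite IH //; have := ltn_ord i; rewrite /bump /=; lia.
Qed.

Lemma prod_monom k (c : 'I_k -> K) (e : 'I_k -> nat) :
  \prod_(j < k) (c j *: 'X^(e j)) = (\prod_(j < k) c j) *: 'X^(\sum_(j < k) e j).
Proof.
rewrite (eq_bigr (fun j => (c j)%:P * 'X^(e j))); last by move=> j _; rewrite mul_polyC.
by rewrite big_split /= -rmorph_prod prodrXr mul_polyC.
Qed.

Lemma pow_ffun (a : fps K) k n M : (n <= M)%N ->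
  fps_pow a k n = \sum_(i : {ffun 'I_k -> 'I_M.+1} | (\sum_(j < k) (i j : nat))%N == n)
                     \prod_(j < k) a (i j).
Proof.
move=> hn; rewrite (tr_pow_coef _ _ hn) /tr poly_def.
have -> : forall x : {poly K}, x ^+ k = \prod_(j < k) x.
  by move=> x; rewrite -(big_mkord xpredT (fun _ => x)) prodr_const_nat subn0.
rewrite bigA_distr_bigA /=.
rewrite coef_sum [RHS]big_mkcond /=; apply: eq_bigr => i _.
rewrite (prod_monom (fun j => a (i j)) (fun j => (i j : nat))) coefZ coefXn eq_sym.
by case: eqP; rewrite ?mulr1 ?mulr0.
Qed.

Lemma sum_single (F : nat -> K) n j : (j < n)%N ->
  (forall i, (i < n)%N -> i != j -> F i = 0) -> \sum_(i < n) F i = F j.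
Proof.
move=> hj h; rewrite (bigD1 (Ordinal hj)) //= big1 ?addr0 // => i hi.
apply: h => //; apply: contraNneq hi => e; apply/eqP/val_inj => /=; exact: e.
Qed.

Lemma powS (a : fps K) k n : fps_pow a k.+1 n = \sum_(i < n.+1) a i * fps_pow a k (n - i)%N.
Proof. by []. Qed.

Lemma pow_vanish (h : fps K) k n : h 0%N = 0 -> h 1%N = 0 -> (n < 2 * k)%N -> fps_pow h k n = 0.
Proof.
move=> h0 h1; elim: k n => [|k IH] n hn; first by [].
rewrite powS big1 // => i _.
case: (ltnP i 2) => hi.
  by case: (nat_of_ord i) hi => [|[|]] // _; rewrite ?h0 ?h1 mul0r.
by have := ltn_ord i; move=> ?; rewrite IH ?mulr0 //; lia.
Qed.

Lemma pow_diag (h : fps K) k : h 0%N = 0 -> h 1%N = 0 -> fps_pow h k (2 * k)%N = h 2%N ^+ k.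
Proof.
move=> h0 h1; elim: k => [|k IH]; first by [].
rewrite powS (@sum_single (fun i => h i * fps_pow h k (2 * k.+1 - i)%N) _ 2); last 2 first.
- lia.
- move=> i hi ne.
  case: (ltnP i 2) => hi2.
    by case: i hi hi2 ne => [|[|]] // _; rewrite ?h0 ?h1 mul0r.
  rewrite pow_vanish ?mulr0 //; lia.
have -> : (2 * k.+1 - 2 = 2 * k)%N by lia.
by rewrite IH exprS.
Qed.

Definition shiftf (fb : fps K) : fps K := fun m => fb m.-1.

Lemma comp_sum_pow (bhat fbar : fps K) n m : fbar 0%N = 0 ->
  comp_sum bhat fbar n m = \sum_(k < m.+1 | (0 < k)%N) bhat k * fps_pow (shiftf fbar) k n.
Proof.
move=> fb0; rewrite /comp_sum; apply: eq_bigr => k _.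
rewrite (@pow_ffun _ _ _ n) // mulr_sumr.
rewrite big_mkcond [RHS]big_mkcond /=; apply: eq_bigr => i _.
case: (boolP [forall j, (0 < i j)%N]) => //= /forallPn [j hj].
case: eqP => // _; rewrite (bigD1 j) //=.
by move: hj; rewrite lt0n negbK => /eqP ->; rewrite /shiftf /= fb0 mul0r mulr0.
Qed.


Lemma eqN_sub N p p' q q' : eqN N p p' -> eqN N q q' -> eqN N (p - q) (p' - q').
Proof. by move=> h1 h2 n hn; rewrite !coefB h1 ?h2. Qed.

Lemma inv_comp N (A U V C' : {poly K}) : V`_0 = 0 -> eqN N (U \Po V) 'X ->
  eqN N (A \Po U) C' -> eqN N A (C' \Po V).
Proof.
move=> V0 EUV H.
have e1 : eqN N (A \Po 'X) (A \Po (U \Po V)).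
  by apply: eqN_comp => //; [exact: eqN_sym | rewrite coefX].
rewrite comp_polyXr comp_polyA in e1.
apply: eqN_trans e1 _; exact: eqN_comp.
Qed.

Lemma XU_comp N (Bp U V : {poly K}) : V`_0 = 0 -> eqN N (U \Po V) 'X ->
  eqN N ((Bp \Po ('X * U)) \Po V) (Bp \Po ('X * V)).
Proof.
move=> V0 EUV; rewrite -comp_polyA comp_polyM comp_polyX [X in eqN _ _ (_ \Po X)]mulrC.
apply: eqN_comp => //; first exact: eqN_mul.
by rewrite coef0M V0 mul0r.
Qed.

Lemma mul_coef N a b n : (n <= N)%N -> fps_mul a b n = (tr N a * tr N b)`_n.
Proof. by move=> hn; rewrite -eqN_tr_mul // tr_coef. Qed.

Lemma mulX0 (u : fps K) : fps_mul (fpsX K) u 0%N = 0.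
Proof. by rewrite (@mul_coef 0) // coef0M tr0 /fpsX mul0r. Qed.

Lemma eqN_trXu N (u : fps K) : eqN N (tr N (fps_mul (fpsX K) u)) ('X * tr N u).
Proof.
apply: (eqN_trans (@eqN_tr_mul N (fpsX K) u)); apply: eqN_mul => //; exact: eqN_tr_X.
Qed.

Lemma trXcomp N (b u : fps K) :
  eqN N (tr N (fps_comp b (fps_mul (fpsX K) u))) (tr N b \Po ('X * tr N u)).
Proof.
apply: (eqN_trans (@eqN_tr_comp N b _ (mulX0 u))); apply: eqN_comp => //.
  exact: eqN_trXu.
by rewrite tr0 mulX0.
Qed.

Lemma EUV N (u v : fps K) : v 0%N = 0 -> (forall n, fps_comp u v n = fpsX K n) ->
  eqN N (tr N u \Po tr N v) 'X.
Proof.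
move=> v0 h; apply: (eqN_trans (eqN_sym (@eqN_tr_comp N u v v0))).
rewrite (@tr_ext N _ (fpsX K)) //; exact: eqN_tr_X.
Qed.

Lemma L4dir (a u v b : fps K) : u 0%N = 0 -> v 0%N = 0 ->
  (forall n, fps_comp u v n = fpsX K n) ->
  (forall n, fps_comp a u n = fps_comp b (fps_mul (fpsX K) u) n) ->
  forall n, a n = fps_comp b (fps_mul (fpsX K) v) n.
Proof.
move=> u0 v0 huv H n.
suff S : eqN n (tr n a) (tr n (fps_comp b (fps_mul (fpsX K) v))).
  by have := S n (leqnn n); rewrite !tr_coef.
have H1 : eqN n (tr n a \Po tr n u) (tr n b \Po ('X * tr n u)).
  apply: (eqN_trans (eqN_sym (@eqN_tr_comp n a u u0))).
  by rewrite (tr_ext (b := fps_comp b (fps_mul (fpsX K) u))) //; exact: trXcomp.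
have V0 : (tr n v)`_0 = 0 by rewrite tr0.
have E := @EUV n u v v0 huv.
have H2 := @inv_comp n _ _ _ _ V0 E H1.
apply: (eqN_trans H2) => //.
apply: (eqN_trans (@XU_comp n (tr n b) _ _ V0 E)).
exact: (eqN_sym (@trXcomp n b v)).
Qed.

Lemma L4dir2 (a u v b : fps K) : u 0%N = 0 -> v 0%N = 0 ->
  (forall n, fps_comp u v n = fpsX K n) ->
  (forall n, a n = fps_comp b (fps_mul (fpsX K) u) n) ->
  forall n, fps_comp a v n = fps_comp b (fps_mul (fpsX K) v) n.
Proof.
move=> u0 v0 huv H n.
suff S : eqN n (tr n (fps_comp a v)) (tr n (fps_comp b (fps_mul (fpsX K) v))).
  by have := S n (leqnn n); rewrite !tr_coef.
have V0 : (tr n v)`_0 = 0 by rewrite tr0.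
have E := @EUV n u v v0 huv.
apply: (eqN_trans (@eqN_tr_comp n a v v0)).
rewrite (tr_ext (a := a) (b := fps_comp b (fps_mul (fpsX K) u))) //.
apply: (eqN_trans (@eqN_comp n _ _ _ _ (@trXcomp n b u) (@eqN_refl n (tr n v)) V0)).
apply: (eqN_trans (@XU_comp n (tr n b) _ _ V0 E)).
exact: (eqN_sym (@trXcomp n b v)).
Qed.


Lemma L1 (g f z : fps K) : is_Zsequence g f z ->
  forall n, riordan_entry g f n.+1 0 = fps_mul g (fps_comp z f) n.
Proof.
move=> HZ n.
have E := HZ n.+1.
rewrite (@mul_coef n.+1) // tr_sub tr_1 in E.
have E2 : (tr n.+1 g * (1 - tr n.+1 (fps_mul (fpsX K) (fps_comp z f))))`_n.+1 =
          (tr n.+1 g * (1 - 'X * tr n.+1 (fps_comp z f)))`_n.+1.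
  apply: (@eqN_mul n.+1) => //; apply: eqN_sub => //; exact: eqN_trXu.
rewrite E2 mulrBr mulr1 coefB mulrCA coefXM /= tr_coef // in E.
rewrite /riordan_entry /fps_pow /= (@mul_coef n.+1) // tr_1 mulr1 tr_coef //.
rewrite (@mul_coef n.+1 _ _ n (leqnSn n)).
by apply/eqP; rewrite -subr_eq0; apply/eqP; rewrite E.
Qed.

Lemma L2 (g f bhat : fps K) n :
  \sum_(j < n.+1) bhat j * riordan_entry g f (n - j) j =
  fps_mul g (fps_comp bhat (fps_mul (fpsX K) f)) n.
Proof.
rewrite (@mul_coef n) //.
have E : (tr n g * tr n (fps_comp bhat (fps_mul (fpsX K) f)))`_n =
         (tr n g * (tr n bhat \Po ('X * tr n f)))`_n.
  apply: (@eqN_mul n) => //; exact: trXcomp.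
rewrite E (@coef_mul_comp _ _ _ n n) //; last by rewrite coef0M coefX mul0r.
apply: eq_bigr => j _; have hj := ltn_ord j.
rewrite tr_coef; last lia.
rewrite exprMn mulrCA coefXnM.
have -> : (n < j)%N = false by lia.
congr (_ * _); rewrite /riordan_entry (@mul_coef n); last lia.
apply: (@eqN_mul n) => //; [exact: eqN_tr_pow | lia].
Qed.

Lemma Xshift (fb : fps K) : fb 0%N = 0 -> fps_mul (fpsX K) fb = shiftf fb.
Proof.
move=> fb0; apply: functional_extensionality => m.
rewrite (@mul_coef m) //.
have -> : (tr m (fpsX K) * tr m fb)`_m = ('X * tr m fb)`_m.
  by apply: (@eqN_mul m) => //; exact: eqN_tr_X.
rewrite coefXM /shiftf; case: m => [|m] /=; first by rewrite fb0.
by rewrite tr_coef.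
Qed.

Lemma pow1 (a : fps K) n : fps_pow a 1 n = a n.
Proof. by rewrite (@tr_pow_coef n) // expr1 tr_coef. Qed.

Lemma f1fb1 (f fbar : fps K) : fbar 0%N = 0 ->
  (forall n, fps_comp fbar f n = fpsX K n) -> f 1%N * fbar 1%N = 1.
Proof.
move=> fb0 H; have := H 1%N.
rewrite /fps_comp big_ord_recl big_ord1 /= fb0 mul0r add0r.
have -> : fps_mul f (fps1 K) 1%N = f 1%N by rewrite -(pow1 f).
by rewrite /fpsX /= mulrC.
Qed.

Lemma Pdecomp (b h : fps K) n m : h 0%N = 0 -> h 1%N = 0 -> (n < 2 * m.+1)%N ->
  \sum_(k < n.+1) b k * fps_pow h k n =
  b 0%N * fps1 K n + \sum_(k < m.+1 | (0 < k)%N) b k * fps_pow h k n.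
Proof.
move=> h0 h1 hn.
rewrite (@sum_ext (fun k => b k * fps_pow h k n) n.+1 m.+1); last 2 first.
- by move=> i hi; rewrite pow_vanish ?mulr0 //; lia.
- by move=> i hi; rewrite pow_vanish ?mulr0 //; lia.
rewrite big_ord_recl [in RHS]big_mkcond big_ord_recl /= add0r.
by [].
Qed.

Lemma Ssplit (b h : fps K) n l :
  \sum_(k < l.+2 | (0 < k)%N) b k * fps_pow h k n =
  \sum_(k < l.+1 | (0 < k)%N) b k * fps_pow h k n + b l.+1 * fps_pow h l.+1 n.
Proof. by rewrite big_mkcond big_ord_recr /= -big_mkcond. Qed.

End Aux.

Theorem theorem3p4 (K : numFieldType) (g f z fbar : fps K) :
  proper_riordan g f ->
  is_Zsequence g f z ->
  is_comp_inverse f fbar ->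
  forall bhat : fps K,
    is_typeII_Bseq g f bhat <->
    [/\ bhat 0%N = z 0%N,
        z 1%N = 0,
        (forall l : nat, (1 <= l)%N ->
           bhat l = f 1%N ^+ l * (z (2 * l)%N - comp_sum bhat fbar (2 * l) l.-1))
      & (forall l : nat, (1 <= l)%N ->
           z (2 * l).+1 = comp_sum bhat fbar (2 * l).+1 l)].
Proof.
move=> [g0 [f0 f1nz]] HZ [fb0 [Hffb Hfbf]] bhat.
have L3 : is_typeII_Bseq g f bhat <->
   (forall n, fps_comp z f n = fps_comp bhat (fps_mul (fpsX K) f) n).
  split => H.
  - apply: (mul_cancel g0) => n; by rewrite -(L1 HZ n) (H n) L2.
  - move=> n; rewrite (L1 HZ n) L2 /fps_mul; apply: eq_bigr => i _; by rewrite H.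
have L4 : (forall n, fps_comp z f n = fps_comp bhat (fps_mul (fpsX K) f) n) <->
          (forall n, z n = fps_comp bhat (fps_mul (fpsX K) fbar) n).
  split.
  - exact: L4dir f0 fb0 Hffb.
  - exact: L4dir2 fb0 f0 Hfbf.
apply: (iff_trans L3); apply: (iff_trans L4).
rewrite (Xshift fb0).
set h := shiftf fbar.
have h0 : h 0%N = 0 by rewrite /h /shiftf fb0.
have h1 : h 1%N = 0 by rewrite /h /shiftf fb0.
have h2 : h 2%N = fbar 1%N by [].
have F1 := f1fb1 fb0 Hfbf.
have CS : forall n m, comp_sum bhat fbar n m =
    \sum_(k < m.+1 | (0 < k)%N) bhat k * fps_pow h k n.
  by move=> n m; rewrite comp_sum_pow.
have Z1 : forall n, (0 < n)%N -> fps1 K n = 0 by case.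
split.
- move=> H; split.
  + by have := H 0%N; rewrite /fps_comp big_ord1 /= mulr1 => ->.
  + have := H 1%N; rewrite /fps_comp (@Pdecomp K _ _ _ 0 h0 h1) //.
    by rewrite Z1 // mulr0 add0r big_mkcond big_ord1.
  + case=> // l _; have := H (2 * l.+1)%N.
    rewrite /fps_comp (@Pdecomp K _ _ _ l.+1 h0 h1); last by lia.
    rewrite Ssplit pow_diag // h2 Z1; last by lia.
    rewrite /= CS => ->.
    by rewrite mulr0 add0r [_ + bhat _ * _]addrC addrK mulrCA -exprMn F1 expr1n mulr1.
  + move=> l hl; have := H (2 * l).+1.
    rewrite /fps_comp (@Pdecomp K _ _ _ l h0 h1); last by lia.
    by rewrite Z1 // mulr0 add0r CS => ->.
- move=> [Hb0 Hz1 Hev Hodd] n.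
  rewrite /fps_comp.
  case: n => [|[|n]].
  + by rewrite big_ord1 /= mulr1 Hb0.
  + rewrite (@Pdecomp K _ _ _ 0 h0 h1) //.
    by rewrite Z1 // mulr0 add0r big_mkcond big_ord1 Hz1.
  have [l [o e]] : exists l (o : bool), (o + 2 * l = n.+2)%N.
    by exists (n.+2)./2, (odd n.+2); rewrite mul2n odd_double_half.
  have [l' el] : exists l', l = l'.+1.
    by exists l.-1; case: o e; case: l => //=; lia.
  case: o e => /= e.
  + rewrite add1n in e.
    rewrite -e (@Pdecomp K _ _ _ l h0 h1); last by lia.
    rewrite Z1 // mulr0 add0r Hodd; last by lia.
    by rewrite CS.
  + rewrite add0n in e.
    rewrite -e el (@Pdecomp K _ _ _ l'.+1 h0 h1); last by lia.
    rewrite Ssplit pow_diag // h2 Z1; last by lia.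
    rewrite mulr0 add0r (Hev l'.+1) // CS /=.
    by rewrite mulrAC -exprMn F1 expr1n mul1r addrC subrK.
Qed.
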